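(* Let $(B,\sqsubseteq)$ be a $\mathsf{DCPO}_\bot$-ordered functor with a cofree comonad, $\Sigma$ a functor with a free monad, and $\rho\colon\Sigma B^\infty\Rightarrow B\Sigma^*$ a monotone biGSOS specification. For each coalgebra $c\colon X\to BX$, let $c^\sharp\colon\Sigma^*X\to B\Sigma^*X$ be the least fixed point of $\varphi_c$ (which exists, the function space being a pointed DCPO under the pointwise order and $\varphi_c$ being monotone). If $h\colon X\to Y$ is a coalgebra homomorphism from $c\colon X\to BX$ to $d\colon Y\to BY$, then $\Sigma^*h$ is a coalgebra homomorphism from $c^\sharp$ to $d^\sharp$. Consequently $\overline{\Sigma^*}(X,c)=(\Sigma^*X,c^\sharp)$, $\overline{\Sigma^*}(h)=\Sigma^*h$ defines a functor $\mathsf{Coalg}(B)\to\mathsf{Coalg}(B)$ lifting $\Sigma^*$ (i.e. commuting with the forgetful functor to $\mathsf{Set}$).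
   Context: An ordered functor $(B,\sqsubseteq)$ is a functor $B\colon\mathsf{Set}\to\mathsf{Set}$ together with a preorder $\sqsubseteq_{BX}$ on $BX$ for every set $X$, such that $Bf$ is monotone for every function $f$. It is $\mathsf{DCPO}_\bot$-ordered if moreover each $\sqsubseteq_{BX}$ is a partial order making $BX$ a pointed DCPO (least element and suprema of all directed subsets), and each $Bf$ is continuous, i.e. preserves suprema of all directed subsets including the empty one (hence preserves the least element). Relation lifting: for $R\subseteq X\times Y$ with projections $\pi_1,\pi_2$ and any functor $F$, $\mathsf{Rel}(F)(R)=\{(b,c)\in FX\times FY\mid\exists d\in FR.\ F\pi_1(d)=b,\ F\pi_2(d)=c\}$; $\mathsf{Rel}_{\sqsubseteq}(B)(R)=\{(b,c)\mid\exists b',c'.\ b\sqsubseteq b',\ (b',c')\in\mathsf{Rel}(B)(R),\ c'\sqsubseteq c\}$. For coalgebras $f\colon X\to BX$, $g\colon Y\to BY$, $R\subseteq X\times Y$ is a simulation if $(f(x),g(y))\in\mathsf{Rel}_{\sqsubseteq}(B)(R)$ for all $(x,y)\in R$; similarity is the greatest simulation. A coalgebra homomorphism from $c\colon X\to BX$ to $d\colon Y\to BY$ is $h\colon X\to Y$ with $Bh\circ c=d\circ h$; $\mathsf{Coalg}(B)$ is the category of $B$-coalgebras and homomorphisms. Cofree comonad: for each set $X$, $\theta_X\colon B^\infty X\to BB^\infty X$, $\epsilon_X\colon B^\infty X\to X$ with $\langle\theta_X,\epsilon_X\rangle$ a final $B(-)\times X$-coalgebra; for $f\colon X\to BX$,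 $f^\infty\colon X\to B^\infty X$ is the unique coalgebra morphism from $\langle f,\mathrm{id}_X\rangle$ to $\langle\theta_X,\epsilon_X\rangle$. The functor $B(-)\times X$ is ordered by $(b,x)\,\widetilde\sqsubseteq\,(c,y)$ iff $b\sqsubseteq c$ and $x=y$; $\lesssim_{B^\infty X}$ is the similarity of $\langle\theta_X,\epsilon_X\rangle$ with itself w.r.t. this order. Free monad: for each set $X$, $\iota_X\colon\Sigma\Sigma^*X\to\Sigma^*X$, $\eta_X\colon X\to\Sigma^*X$ with $[\iota_X,\eta_X]$ an initial algebra for $\Sigma(-)+X$; $\mu_X\colon\Sigma^*\Sigma^*X\to\Sigma^*X$ is the unique map with $\mu_X\circ\eta_{\Sigma^*X}=\mathrm{id}$ and $\mu_X\circ\iota_{\Sigma^*X}=\iota_X\circ\Sigma\mu_X$. A biGSOS specification is a natural transformation $\rho\colon\Sigma B^\infty\Rightarrow B\Sigma^*$; it is monotone if for every set $X$ and all $u,v\in\Sigma B^\infty X$ with $(u,v)\in\mathsf{Rel}(\Sigma)(\lesssim_{B^\infty X})$, $\rho_X(u)\sqsubseteq_{B\Sigma^*X}\rho_X(v)$. For $c\colon X\to BX$, $\varphi_c(f)=[\,B\mu_X\circ\rho_{\Sigma^*X}\circ\Sigma f^\infty,\ B\eta_X\circ c\,]\circ[\iota_X,\eta_X]^{-1}$ for $f\colon\Sigma^*X\to B\Sigma^*X$. *)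

(* Defs.v *)
From Stdlib Require Import Relations.

Record Functor := {
  F0 :> Type -> Type;
  fmap : forall A B : Type, (A -> B) -> F0 A -> F0 B;
  fmap_id : forall A (x : F0 A), fmap A A (fun a => a) x = x;
  fmap_comp : forall A B C (f : A -> B) (g : B -> C) (x : F0 A),
      fmap A C (fun a => g (f a)) x = fmap B C g (fmap A B f x)
}.
Arguments fmap f0 {A B}.

Definition preorder_on {A} (le : A -> A -> Prop) : Prop :=
  (forall x, le x x) /\ (forall x y z, le x y -> le y z -> le x z).

(* directed subsets; the empty subset counts as directed *)
Definition directed {A} (le : A -> A -> Prop) (D : A -> Prop) : Prop :=
  forall x y, D x -> D y -> exists z, D z /\ le x z /\ le y z.

Definition is_sup {A} (le : A -> A -> Prop) (D : A -> Prop) (s : A) : Prop :=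
  (forall x, D x -> le x s) /\ (forall u, (forall x, D x -> le x u) -> le s u).

Definition pointed_dcpo {A} (le : A -> A -> Prop) : Prop :=
  preorder_on le /\ (forall x y, le x y -> le y x -> x = y) /\
  (exists bot, forall x, le bot x) /\
  (forall D, directed le D -> exists s, is_sup le D s).

Definition ordered_functor (B : Functor) (le : forall X, B X -> B X -> Prop) : Prop :=
  (forall X, preorder_on (le X)) /\
  (forall X Y (f : X -> Y) b b', le X b b' -> le Y (fmap B f b) (fmap B f b')).

(** DCPO_bot-ordered functor: each B f continuous (preserves all directed sups,
    including the empty one). *)
Definition DCPObot_ordered (B : Functor) (le : forall X, B X -> B X -> Prop) : Prop :=
  ordered_functor B le /\
  (forall X, pointed_dcpo (le X)) /\
  (forall X Y (f : X -> Y) (D : B X -> Prop) s,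
      directed (le X) D -> is_sup (le X) D s ->
      is_sup (le Y) (fun y => exists x, D x /\ y = fmap B f x) (fmap B f s)).

Definition RelLift {F : Type -> Type} (fm : forall A B : Type, (A -> B) -> F A -> F B)
  {X Y : Type} (R : X -> Y -> Prop) (b : F X) (c : F Y) : Prop :=
  exists d : F {p : X * Y | R (fst p) (snd p)},
    fm _ _ (fun p => fst (proj1_sig p)) d = b /\
    fm _ _ (fun p => snd (proj1_sig p)) d = c.

Definition RelLiftOrd {F : Type -> Type} (fm : forall A B : Type, (A -> B) -> F A -> F B)
  (le : forall X, F X -> F X -> Prop)
  {X Y : Type} (R : X -> Y -> Prop) (b : F X) (c : F Y) : Prop :=
  exists b' c', le X b b' /\ RelLift fm R b' c' /\ le Y c' c.

Definition simulation {F : Type -> Type} (fm : forall A B : Type, (A -> B) -> F A -> F B)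
  (le : forall X, F X -> F X -> Prop)
  {X Y : Type} (f : X -> F X) (g : Y -> F Y) (R : X -> Y -> Prop) : Prop :=
  forall x y, R x y -> RelLiftOrd fm le R (f x) (g y).

Definition similarity {F : Type -> Type} (fm : forall A B : Type, (A -> B) -> F A -> F B)
  (le : forall X, F X -> F X -> Prop)
  {X Y : Type} (f : X -> F X) (g : Y -> F Y) (x : X) (y : Y) : Prop :=
  exists R, simulation fm le f g R /\ R x y.

(** ** Cofree comonad: final B(-) x X coalgebras, given with their unfolds *)
Record CofreeComonad (B : Functor) := {
  Binf : Type -> Type;
  theta : forall X, Binf X -> B (Binf X);
  eps : forall X, Binf X -> X;
  unfold : forall X (Z : Type), (Z -> B Z) -> (Z -> X) -> Z -> Binf X;
  unfold_theta : forall X Z g e z,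
      theta X (unfold X Z g e z) = fmap B (unfold X Z g e) (g z);
  unfold_eps : forall X Z g e z, eps X (unfold X Z g e z) = e z;
  unfold_unique : forall X Z g e (m : Z -> Binf X),
      (forall z, theta X (m z) = fmap B m (g z)) ->
      (forall z, eps X (m z) = e z) ->
      forall z, m z = unfold X Z g e z
}.
Arguments Binf {B} c X.
Arguments theta {B} c {X}.
Arguments eps {B} c {X}.
Arguments unfold {B} c {X Z}.

Definition cof_ext {B : Functor} (CF : CofreeComonad B) {X} (f : X -> B X) : X -> Binf CF X :=
  unfold CF f (fun x => x).

Definition Binf_map {B : Functor} (CF : CofreeComonad B) {X Y} (g : X -> Y) : Binf CF X -> Binf CF Y :=
  unfold CF (@theta B CF X) (fun z => g (eps CF z)).

Definition BxX (B : Functor) (X : Type) : Type -> Type := fun Z => (B Z * X)%type.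
Definition BxX_map (B : Functor) (X : Type) : forall A C : Type, (A -> C) -> BxX B X A -> BxX B X C :=
  fun A C f p => (fmap B f (fst p), snd p).
Definition BxX_le {B : Functor} (le : forall Z, B Z -> B Z -> Prop) (X : Type)
  : forall Z, BxX B X Z -> BxX B X Z -> Prop :=
  fun Z p q => le Z (fst p) (fst q) /\ snd p = snd q.

Definition Binf_sim {B : Functor} (le : forall Z, B Z -> B Z -> Prop) (CF : CofreeComonad B) (X : Type)
  : Binf CF X -> Binf CF X -> Prop :=
  similarity (BxX_map B X) (BxX_le le X)
    (fun z => (theta CF z, eps CF z)) (fun z => (theta CF z, eps CF z)).

(** ** Free monad: initial Sigma(-) + X algebras, given with their folds *)
Record FreeMonad (S : Functor) := {
  Sstar : Type -> Type;
  iota : forall X, S (Sstar X) -> Sstar X;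
  eta : forall X, X -> Sstar X;
  fold : forall X (Z : Type), (S Z -> Z) -> (X -> Z) -> Sstar X -> Z;
  fold_iota : forall X Z a b t,
      fold X Z a b (iota X t) = a (fmap S (fold X Z a b) t);
  fold_eta : forall X Z a b x, fold X Z a b (eta X x) = b x;
  fold_unique : forall X Z a b (m : Sstar X -> Z),
      (forall t, m (iota X t) = a (fmap S m t)) ->
      (forall x, m (eta X x) = b x) ->
      forall s, m s = fold X Z a b s
}.
Arguments Sstar {S} f X.
Arguments iota {S} f {X}.
Arguments eta {S} f {X}.
Arguments fold {S} f {X Z}.

Definition Sstar_map {S : Functor} (FM : FreeMonad S) {X Y} (h : X -> Y) : Sstar FM X -> Sstar FM Y :=
  fold FM (@iota S FM Y) (fun x => eta FM (h x)).

Definition mu {S : Functor} (FM : FreeMonad S) (X : Type) : Sstar FM (Sstar FM X) -> Sstar FM X :=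
  fold FM (@iota S FM X) (fun s => s).

(* [iota_X, eta_X]^{-1} (Lambek) *)
Definition destr {S : Functor} (FM : FreeMonad S) (X : Type) : Sstar FM X -> (S (Sstar FM X) + X)%type :=
  fold FM (fun t => inl (fmap S (fun z => match z with
                                           | inl u => iota FM u
                                           | inr x => eta FM x end) t))
          (fun x => inr x).

Definition natural_biGSOS {B S : Functor} (CF : CofreeComonad B) (FM : FreeMonad S)
  (rho : forall X, S (Binf CF X) -> B (Sstar FM X)) : Prop :=
  forall X Y (g : X -> Y) (u : S (Binf CF X)),
    rho Y (fmap S (Binf_map CF g) u) = fmap B (Sstar_map FM g) (rho X u).

Definition monotone_biGSOS {B S : Functor} (le : forall Z, B Z -> B Z -> Prop)
  (CF : CofreeComonad B) (FM : FreeMonad S)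
  (rho : forall X, S (Binf CF X) -> B (Sstar FM X)) : Prop :=
  forall X (u v : S (Binf CF X)),
    RelLift (@fmap S) (Binf_sim le CF X) u v -> le (Sstar FM X) (rho X u) (rho X v).

Definition phi {B S : Functor} (CF : CofreeComonad B) (FM : FreeMonad S)
  (rho : forall X, S (Binf CF X) -> B (Sstar FM X)) {X} (c : X -> B X)
  (f : Sstar FM X -> B (Sstar FM X)) : Sstar FM X -> B (Sstar FM X) :=
  fun s => match destr FM X s with
           | inl t => fmap B (mu FM X) (rho (Sstar FM X) (fmap S (cof_ext CF f) t))
           | inr x => fmap B (eta FM) (c x)
           end.

Definition is_lfp {A C} (le : C -> C -> Prop) (F : (A -> C) -> (A -> C)) (f : A -> C) : Prop :=
  (forall a, f a = F f a) /\
  (forall g, (forall a, g a = F g a) -> forall a, le (f a) (g a)).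

Definition coalg_hom {B : Functor} {X Y} (c : X -> B X) (d : Y -> B Y) (h : X -> Y) : Prop :=
  forall x, fmap B h (c x) = d (h x).

(* Main.v *)
Require Import Defs.
From Stdlib Require Import Classical ClassicalEpsilon FunctionalExtensionality.

Lemma pataraia {A : Type} (le : A -> A -> Prop) (pre : preorder_on le) (P : A -> Prop) (F : A -> A)
 (mono : forall x y, le x y -> le (F x) (F y))
 (Pcl : forall x, P x -> P (F x))
 (Psup : forall D, directed le D -> (forall x, D x -> P x) -> exists s, is_sup le D s /\ P s) :
 exists s, P s /\ le s (F s) /\ le (F s) s /\ (forall p, P p -> le (F p) p -> le s p).
Proof.
  destruct pre as [refl trans].
  pose (Q := fun x => P x /\ le x (F x) /\ (forall p, P p -> le (F p) p -> le x p)).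
  assert (Qsup : forall D s, (forall x, D x -> Q x) -> is_sup le D s -> P s -> Q s).
  { intros D s HD Hs Ps. split; [exact Ps|split].
    - apply (proj2 Hs). intros x Dx. destruct (HD x Dx) as [_ [H1 _]].
      apply trans with (F x); [exact H1|]. apply mono, (proj1 Hs), Dx.
    - intros p Pp Fp. apply (proj2 Hs). intros x Dx. destruct (HD x Dx) as [_ [_ H2]]. auto. }
  assert (QF : forall x, Q x -> Q (F x)).
  { intros x [Px [H1 H2]]. split; [auto|split].
    - apply mono, H1.
    - intros p Pp Fp. apply trans with (F p); auto. }
  pose (M := fun g : A -> A => (forall x, Q x -> Q (g x)) /\ (forall x, Q x -> le x (g x)) /\
          (forall x y, Q x -> Q y -> le x y -> le (g x) (g y))).
  pose (DX := fun x y => exists g, M g /\ y = g x).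
  assert (Hdir : forall x, Q x -> directed le (DX x)).
  { intros x Qx y1 y2 [g1 [[M1a [M1b M1c]] ->]] [g2 [[M2a [M2b M2c]] ->]].
    exists (g1 (g2 x)). split.
    - exists (fun z => g1 (g2 z)). split; [|reflexivity].
      split; [|split].
      + intros z Qz; auto.
      + intros z Qz. apply trans with (g2 z); auto.
      + intros z w Qz Qw Hzw. apply M1c; auto.
    - split; [apply M1c; auto | apply M1b; auto]. }
  assert (HDP : forall x, Q x -> forall y, DX x y -> P y).
  { intros x Qx y [g [[Ma _] ->]]. exact (proj1 (Ma x Qx)). }
  assert (Hex : forall x, exists s, Q x -> is_sup le (DX x) s /\ P s).
  { intro x. destruct (classic (Q x)) as [Hq|Hq].
    - destruct (Psup (DX x) (Hdir x Hq) (HDP x Hq)) as [s Hs]. exists s; auto.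
    - exists x; tauto. }
  pose (t := fun x => proj1_sig (constructive_indefinite_description _ (Hex x))).
  assert (ht : forall x, Q x -> is_sup le (DX x) (t x) /\ P (t x)).
  { intros x Qx. exact (proj2_sig (constructive_indefinite_description _ (Hex x)) Qx). }
  assert (Qt : forall x, Q x -> Q (t x)).
  { intros x Qx. destruct (ht x Qx) as [Hs Ps]. apply (Qsup (DX x)); auto.
    intros y [g [[Ma _] ->]]. auto. }
  assert (Mid : M (fun z => z)).
  { split; [|split]; auto. }
  assert (Mt : M (fun x => F (t x))).
  { split; [|split].
    - intros x Qx. apply QF, Qt, Qx.
    - intros x Qx. apply trans with (t x).
      + apply (proj1 (proj1 (ht x Qx))). exists (fun z => z). split; [exact Mid|reflexivity].
      + exact (proj1 (proj2 (Qt x Qx))).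
    - intros x y Qx Qy Hxy. apply mono. apply (proj2 (proj1 (ht x Qx))).
      intros z [g [[Ma [Mb Mc]] ->]]. apply trans with (g y); [apply Mc; auto|].
      apply (proj1 (proj1 (ht y Qy))). exists g. split; [split; auto|reflexivity]. }
  destruct (Psup (fun _ => False)) as [b [Hb Pb]].
  { intros x y Hx; contradiction. }
  { intros x Hx; contradiction. }
  assert (Hbot : forall u, le b u) by (intro u; apply (proj2 Hb); intros x Hx; contradiction).
  assert (Qb : Q b) by (split; [exact Pb| split; auto]).
  exists (t b). destruct (Qt b Qb) as [Ps [H1 H2]]. split; [exact Ps|split; [exact H1|split; [|exact H2]]].
  apply (proj1 (proj1 (ht b Qb))). exists (fun x => F (t x)). split; [exact Mt|reflexivity].
Qed.

Lemma Sstar_map_id {S : Functor} (FM : FreeMonad S) X (s : Sstar FM X) :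
  Sstar_map FM (fun x : X => x) s = s.
Proof.
  unfold Sstar_map. symmetry.
  apply (fold_unique S FM X _ (@iota S FM X) (fun x => eta FM x) (fun s => s)); [|reflexivity].
  intro t. rewrite fmap_id. reflexivity.
Qed.

Lemma Sstar_map_iota {S : Functor} (FM : FreeMonad S) X Y (h : X -> Y) t :
  Sstar_map FM h (iota FM t) = iota FM (fmap S (Sstar_map FM h) t).
Proof. unfold Sstar_map. rewrite fold_iota. reflexivity. Qed.

Lemma Sstar_map_eta {S : Functor} (FM : FreeMonad S) X Y (h : X -> Y) x :
  Sstar_map FM h (eta FM x) = eta FM (h x).
Proof. unfold Sstar_map. rewrite fold_eta. reflexivity. Qed.

Lemma Sstar_map_comp {S : Functor} (FM : FreeMonad S) X Y Z (f : X -> Y) (g : Y -> Z) s :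
  Sstar_map FM (fun x => g (f x)) s = Sstar_map FM g (Sstar_map FM f s).
Proof.
  unfold Sstar_map at 1. symmetry.
  apply (fold_unique S FM X _ (@iota S FM Z) (fun x => eta FM (g (f x)))
           (fun s => Sstar_map FM g (Sstar_map FM f s))).
  - intro t. rewrite !Sstar_map_iota. rewrite <- fmap_comp. reflexivity.
  - intro x. rewrite !Sstar_map_eta. reflexivity.
Qed.

Lemma destr_id {S : Functor} (FM : FreeMonad S) X (s : Sstar FM X) :
  match destr FM X s with inl u => iota FM u | inr x => eta FM x end = s.
Proof.
  transitivity (fold FM (@iota S FM X) (fun x => eta FM x) s).
  - apply (fold_unique S FM X _ (@iota S FM X) (fun x => eta FM x)
      (fun s => match destr FM X s with inl u => iota FM u | inr x => eta FM x end)).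
    + intro t. unfold destr at 1. rewrite fold_iota. rewrite <- fmap_comp. reflexivity.
    + intro x. unfold destr. rewrite fold_eta. reflexivity.
  - symmetry. apply (fold_unique S FM X _ (@iota S FM X) (fun x => eta FM x) (fun s => s)); [|reflexivity].
    intro t. rewrite fmap_id. reflexivity.
Qed.

Lemma destr_iota {S : Functor} (FM : FreeMonad S) X t :
  destr FM X (iota FM t) = inl t.
Proof.
  unfold destr at 1. rewrite fold_iota. f_equal. rewrite <- fmap_comp.
  transitivity (fmap S (fun s : Sstar FM X => s) t); [|apply fmap_id].
  f_equal. apply functional_extensionality. intro s. apply destr_id.
Qed.

Lemma destr_eta {S : Functor} (FM : FreeMonad S) X x :
  destr FM X (eta FM x) = inr x.
Proof. unfold destr. rewrite fold_eta. reflexivity. Qed.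

Lemma sim_lemma (B : Functor) (le : forall X, B X -> B X -> Prop) (hB : ordered_functor B le)
  (CF : CofreeComonad B) Z (f g : Z -> B Z) (Hfg : forall z, le Z (f z) (g z)) z :
  Binf_sim le CF Z (cof_ext CF f z) (cof_ext CF g z).
Proof.
  destruct hB as [hpre hfm].
  exists (fun a b => exists z, a = cof_ext CF f z /\ b = cof_ext CF g z).
  split; [|eauto].
  intros a b [w [-> ->]]. unfold RelLiftOrd.
  exists (fmap B (cof_ext CF f) (g w), w), (theta CF (cof_ext CF g w), eps CF (cof_ext CF g w)).
  split; [|split].
  - unfold BxX_le; simpl. unfold cof_ext. rewrite unfold_theta, unfold_eps. split; [|reflexivity].
    apply hfm, Hfg.
  - exists (fmap B (fun v => exist (fun p : Binf CF Z * Binf CF Z =>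
              exists z, fst p = cof_ext CF f z /\ snd p = cof_ext CF g z)
              (cof_ext CF f v, cof_ext CF g v) (ex_intro _ v (conj eq_refl eq_refl))) (g w), w).
    unfold BxX_map; simpl. split.
    + f_equal. rewrite <- fmap_comp. reflexivity.
    + unfold cof_ext. rewrite unfold_theta, unfold_eps. f_equal. rewrite <- fmap_comp. reflexivity.
  - unfold BxX_le; simpl. split; [apply (proj1 (hpre _))|reflexivity].
Qed.

Lemma phi_mono (B : Functor) (le : forall X, B X -> B X -> Prop) (hB : ordered_functor B le)
  (CF : CofreeComonad B) (S : Functor) (FM : FreeMonad S)
  (rho : forall X, S (Binf CF X) -> B (Sstar FM X))
  (hmono : monotone_biGSOS le CF FM rho) X (c : X -> B X) f g
  (Hfg : forall a, le _ (f a) (g a)) a :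
  le _ (phi CF FM rho c f a) (phi CF FM rho c g a).
Proof.
  pose proof hB as [hpre hfm].
  unfold phi. destruct (destr FM X a) as [t|x].
  - apply hfm. apply hmono.
    exists (fmap S (fun z => exist (fun p : Binf CF (Sstar FM X) * Binf CF (Sstar FM X) =>
              Binf_sim le CF (Sstar FM X) (fst p) (snd p))
              (cof_ext CF f z, cof_ext CF g z) (sim_lemma B le hB CF _ f g Hfg z)) t).
    split; rewrite <- fmap_comp; reflexivity.
  - apply (proj1 (hpre _)).
Qed.

Lemma mu_nat {S : Functor} (FM : FreeMonad S) X Y (h : X -> Y) s :
  Sstar_map FM h (mu FM X s) = mu FM Y (Sstar_map FM (Sstar_map FM h) s).
Proof.
  transitivity (fold FM (@iota S FM Y) (Sstar_map FM h) s).
  - apply (fold_unique S FM _ _ (@iota S FM Y) (Sstar_map FM h) (fun s => Sstar_map FM h (mu FM X s))).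
    + intro t. unfold mu at 1. rewrite fold_iota, Sstar_map_iota. rewrite <- fmap_comp. reflexivity.
    + intro x. unfold mu. rewrite fold_eta. reflexivity.
  - symmetry. apply (fold_unique S FM _ _ (@iota S FM Y) (Sstar_map FM h)
       (fun s => mu FM Y (Sstar_map FM (Sstar_map FM h) s))).
    + intro t. rewrite Sstar_map_iota. unfold mu at 1. rewrite fold_iota. rewrite <- fmap_comp. reflexivity.
    + intro x. rewrite Sstar_map_eta. unfold mu. rewrite fold_eta. reflexivity.
Qed.

Lemma binf_nat {B : Functor} (CF : CofreeComonad B) Z W (f : Z -> B Z) (f' : W -> B W) (g : Z -> W)
  (H : forall z, fmap B g (f z) = f' (g z)) z :
  Binf_map CF g (cof_ext CF f z) = cof_ext CF f' (g z).
Proof.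
  transitivity (unfold CF f g z).
  - apply (unfold_unique B CF W Z f g (fun z => Binf_map CF g (cof_ext CF f z))).
    + intro w. unfold Binf_map at 1. rewrite unfold_theta. unfold cof_ext at 1. rewrite unfold_theta.
      rewrite <- fmap_comp. reflexivity.
    + intro w. unfold Binf_map. rewrite unfold_eps. unfold cof_ext. rewrite unfold_eps. reflexivity.
  - symmetry. apply (unfold_unique B CF W Z f g (fun z => cof_ext CF f' (g z))).
    + intro w. unfold cof_ext at 1. rewrite unfold_theta. rewrite <- H. rewrite <- fmap_comp. reflexivity.
    + intro w. unfold cof_ext. rewrite unfold_eps. reflexivity.
Qed.

Lemma phi_hom (B : Functor) (CF : CofreeComonad B) (S : Functor) (FM : FreeMonad S)
  (rho : forall X, S (Binf CF X) -> B (Sstar FM X))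
  (hnat : natural_biGSOS CF FM rho) X Y (c : X -> B X) (d : Y -> B Y) (h : X -> Y)
  (hh : coalg_hom c d h) f f'
  (H : forall s, fmap B (Sstar_map FM h) (f s) = f' (Sstar_map FM h s)) s :
  fmap B (Sstar_map FM h) (phi CF FM rho c f s) = phi CF FM rho d f' (Sstar_map FM h s).
Proof.
  rewrite <- (destr_id FM X s). destruct (destr FM X s) as [t|x].
  - rewrite Sstar_map_iota. unfold phi. rewrite !destr_iota.
    rewrite <- fmap_comp.
    assert (E : fmap S (cof_ext CF f') (fmap S (Sstar_map FM h) t)
              = fmap S (Binf_map CF (Sstar_map FM h)) (fmap S (cof_ext CF f) t)).
    { rewrite <- !fmap_comp. f_equal. apply functional_extensionality. intro z.
      symmetry. apply binf_nat. exact H. }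
    rewrite E, hnat. rewrite <- fmap_comp. f_equal.
    apply functional_extensionality. intro z. apply mu_nat.
  - rewrite Sstar_map_eta. unfold phi. rewrite !destr_eta.
    rewrite <- fmap_comp, <- hh, <- fmap_comp. f_equal.
    apply functional_extensionality. intro z. apply Sstar_map_eta.
Qed.

Definition lefun {A0 C} (le : C -> C -> Prop) (f g : A0 -> C) : Prop := forall a, le (f a) (g a).

Lemma dir_pt {A0 C} (le : C -> C -> Prop) (D : (A0 -> C) -> Prop)
  (Hd : directed (lefun le) D) a : directed le (fun y => exists f, D f /\ y = f a).
Proof.
  intros y1 y2 [f1 [D1 ->]] [f2 [D2 ->]].
  destruct (Hd f1 f2 D1 D2) as [g [Dg [H1 H2]]].
  exists (g a). split; [exists g; auto| split; [apply H1|apply H2]].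
Qed.

Lemma pw_sup {A0 C} (le : C -> C -> Prop) (hd : pointed_dcpo le) (D : (A0 -> C) -> Prop)
  (Hd : directed (lefun le) D) :
  exists T : A0 -> C, forall a, is_sup le (fun y => exists f, D f /\ y = f a) (T a).
Proof.
  destruct hd as [_ [_ [_ hs]]].
  assert (H : forall a, exists s, is_sup le (fun y => exists f, D f /\ y = f a) s).
  { intro a. apply hs, dir_pt, Hd. }
  exists (fun a => proj1_sig (constructive_indefinite_description _ (H a))).
  intro a. exact (proj2_sig (constructive_indefinite_description _ (H a))).
Qed.

Lemma pw_is_sup {A0 C} (le : C -> C -> Prop) (D : (A0 -> C) -> Prop) T
  (HT : forall a, is_sup le (fun y => exists f, D f /\ y = f a) (T a)) :
  is_sup (lefun le) D T.
Proof.
  split.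
  - intros f Df a. apply (proj1 (HT a)). exists f; auto.
  - intros u Hu a. apply (proj2 (HT a)). intros y [f [Df ->]]. apply Hu, Df.
Qed.

Lemma is_sup_ext {C} (le : C -> C -> Prop) (D D' : C -> Prop) s
  (E : forall y, D y <-> D' y) : is_sup le D s -> is_sup le D' s.
Proof.
  intros [H1 H2]. split.
  - intros x Hx. apply H1, E, Hx.
  - intros u Hu. apply H2. intros x Hx. apply Hu, E, Hx.
Qed.

Lemma is_sup_uniq {C} (le : C -> C -> Prop) (hd : pointed_dcpo le) D s s' :
  is_sup le D s -> is_sup le D s' -> s = s'.
Proof.
  destruct hd as [_ [anti _]]. intros [H1 H2] [H1' H2'].
  apply anti; [apply H2, H1' | apply H2', H1].
Qed.

Theorem mainTheorem8
  (B : Functor) (le : forall X, B X -> B X -> Prop) (hB : DCPObot_ordered B le)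
  (CF : CofreeComonad B) (S : Functor) (FM : FreeMonad S)
  (rho : forall X, S (Binf CF X) -> B (Sstar FM X))
  (hnat : natural_biGSOS CF FM rho) (hmono : monotone_biGSOS le CF FM rho) :
  (* c^sharp exists *)
  (forall X (c : X -> B X), exists cs, is_lfp (le (Sstar FM X)) (phi CF FM rho c) cs) /\
  (* Sigma^* h is a homomorphism c^sharp -> d^sharp *)
  (forall X Y (c : X -> B X) (d : Y -> B Y) (h : X -> Y),
      coalg_hom c d h ->
      forall cs ds, is_lfp (le (Sstar FM X)) (phi CF FM rho c) cs ->
                    is_lfp (le (Sstar FM Y)) (phi CF FM rho d) ds ->
                    coalg_hom cs ds (Sstar_map FM h)) /\
  (* functor laws of the lifting (X,c) |-> (Sigma^* X, c^sharp), h |-> Sigma^* h *)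
  (forall X (s : Sstar FM X), Sstar_map FM (fun x : X => x) s = s) /\
  (forall X Y Z (f : X -> Y) (g : Y -> Z) (s : Sstar FM X),
      Sstar_map FM (fun x => g (f x)) s = Sstar_map FM g (Sstar_map FM f s)).
Proof.
  pose proof hB as [hord [hdcpo hcont]].
  pose proof hord as [hpre hfm].
  assert (refl : forall Z x, le Z x x) by (intros Z; apply (proj1 (hpre Z))).
  assert (trans : forall Z x y z, le Z x y -> le Z y z -> le Z x z) by (intros Z; apply (proj2 (hpre Z))).
  assert (anti : forall Z x y, le Z x y -> le Z y x -> x = y) by (intros Z; apply (proj1 (proj2 (hdcpo Z)))).
  split; [|split; [|split]].
  - intros X c.
    destruct (pataraia (lefun (le (Sstar FM X))) (conj (fun f a => refl _ _)
                (fun f g k H1 H2 a => trans _ _ _ _ (H1 a) (H2 a)))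
               (fun _ => True) (phi CF FM rho c)) as [s [_ [H1 [H2 H3]]]].
    + intros f g Hfg a. apply phi_mono; auto.
    + auto.
    + intros D Hd _. destruct (pw_sup _ (hdcpo _) D Hd) as [T HT].
      exists T. split; [apply pw_is_sup, HT|exact I].
    + exists s. split.
      * intro a. apply anti; [apply H1|apply H2].
      * intros g Hg. apply H3; [exact I|]. intro a. unfold lefun in *. simpl. rewrite <- (Hg a). apply refl.
  - intros X Y c d h hh cs ds [csfix csl] [dsfix dsl].
    set (A := ((Sstar FM X -> B (Sstar FM X)) * (Sstar FM Y -> B (Sstar FM Y)))%type).
    set (leA := fun p q : A => lefun (le _) (fst p) (fst q) /\ lefun (le _) (snd p) (snd q)).
    set (FA := fun p : A => (phi CF FM rho c (fst p), phi CF FM rho d (snd p)) : A).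
    set (HP := fun p : A => forall s, fmap B (Sstar_map FM h) (fst p s) = snd p (Sstar_map FM h s)).
    set (P := fun p : A => HP p /\ leA p (cs, ds)).
    destruct (pataraia leA) with (P := P) (F := FA) as [u [[Hu1 Hu2] [Hu3 [Hu4 _]]]].
    + split.
      * intro p. split; intro a; apply refl.
      * intros p q r [H1 H2] [H3 H4]. split; intro a; eapply trans; eauto.
    + intros p q [H1 H2]. split; intro a; simpl; apply phi_mono; auto.
    + intros p [H1 [H2 H3]]. split.
      * intro s. simpl. apply phi_hom; auto.
      * split; intro a; simpl.
        -- rewrite (csfix a). apply phi_mono; auto.
        -- rewrite (dsfix a). apply phi_mono; auto.
    + intros D Hd HDP.
      set (D1 := fun f => exists p, D p /\ f = fst p).
      set (D2 := fun f => exists p, D p /\ f = snd p).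
      assert (Hd1 : directed (lefun (le _)) D1).
      { intros f1 f2 [p1 [Dp1 ->]] [p2 [Dp2 ->]].
        destruct (Hd p1 p2 Dp1 Dp2) as [q [Dq [[Ha _] [Hb _]]]].
        exists (fst q). split; [exists q; auto|auto]. }
      assert (Hd2 : directed (lefun (le _)) D2).
      { intros f1 f2 [p1 [Dp1 ->]] [p2 [Dp2 ->]].
        destruct (Hd p1 p2 Dp1 Dp2) as [q [Dq [[_ Ha] [_ Hb]]]].
        exists (snd q). split; [exists q; auto|auto]. }
      destruct (pw_sup _ (hdcpo _) D1 Hd1) as [T1 HT1].
      destruct (pw_sup _ (hdcpo _) D2 Hd2) as [T2 HT2].
      assert (Hsup : is_sup leA D (T1, T2)).
      { split.
        - intros p Dp. split; intro a; simpl.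
          + apply (proj1 (HT1 a)). exists (fst p). split; [exists p; auto|reflexivity].
          + apply (proj1 (HT2 a)). exists (snd p). split; [exists p; auto|reflexivity].
        - intros v Hv. split; intro a; simpl.
          + apply (proj2 (HT1 a)). intros y [f [[p [Dp ->]] ->]]. apply (proj1 (Hv p Dp)).
          + apply (proj2 (HT2 a)). intros y [f [[p [Dp ->]] ->]]. apply (proj2 (Hv p Dp)). }
      exists (T1, T2). split; [exact Hsup|split].
      * intro s. simpl.
        pose proof (hcont _ _ (Sstar_map FM h) _ _ (dir_pt _ D1 Hd1 s) (HT1 s)) as Hc.
        apply (is_sup_uniq _ (hdcpo _) _ _ _ Hc).
        refine (is_sup_ext _ _ _ _ _ (HT2 (Sstar_map FM h s))).
        intro y. split.
        -- intros [f [[p [Dp ->]] ->]]. exists (fst p s). split.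
           ++ exists (fst p). split; [exists p; auto|reflexivity].
           ++ symmetry. apply (proj1 (HDP p Dp)).
        -- intros [x [[f [[p [Dp ->]] ->]] ->]]. exists (snd p). split; [exists p; auto|].
           apply (proj1 (HDP p Dp)).
      * apply (proj2 Hsup). intros p Dp. apply (proj2 (HDP p Dp)).
    + assert (E1 : forall a, cs a = fst u a).
      { intro a. apply anti; [|apply (proj1 Hu2)].
        apply csl. intro b. apply anti; [apply (proj1 Hu3)|apply (proj1 Hu4)]. }
      assert (E2 : forall a, ds a = snd u a).
      { intro a. apply anti; [|apply (proj2 Hu2)].
        apply dsl. intro b. apply anti; [apply (proj2 Hu3)|apply (proj2 Hu4)]. }
      intro x. rewrite E1, E2. apply Hu1.
  - apply Sstar_map_id.
  - apply Sstar_map_comp.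
Qed.
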